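(* If $B,C\in \mathcal{B}_{A}(\mathcal{H})$, then \begin{align*} d\omega _{A_{0}}^{2}\left( \begin{bmatrix} 0 & B \\ C & 0 \end{bmatrix} \right) &\leq \frac{1}{4}\max \left\{ \omega _{A}\left( BB^{\sharp _{A}}+C^{\sharp _{A}}C+4\left( C^{\sharp _{A}}C\right) ^{2}\right) ,\omega _{A}\left( B^{\sharp _{A}}B+CC^{\sharp _{A}}+4\left( B^{\sharp _{A}}B\right) ^{2}\right) \right\} \\ &\quad +\frac{1}{2}\max \left\{ \omega _{A}\left( BC\right) ,\omega _{A}\left( CB\right) \right\}. \end{align*}
   Context: $\mathcal{H}$ is a complex Hilbert space and $A\in\mathcal{B}(\mathcal{H})$ is a positive operator; $\langle x,z\rangle_A=\langle Ax,z\rangle$ and $\|z\|_A=\|A^{1/2}z\|$. $\mathcal{B}_A(\mathcal{H})$ denotes the set of bounded operators $S$ on $\mathcal{H}$ admitting an $A$-adjoint; $S^{\sharp_A}=A^{\dagger}S^*A$ is the distinguished $A$-adjoint ($A^\dagger$ the Moore-Penrose inverse). $\omega_A(S)=\sup\{|\langle Sz,z\rangle_A|:\|z\|_A=1\}$ is the $A$-numerical radius. $A_0=\begin{bmatrix} A&0\\0&A\end{bmatrix}$ on $\mathcal{H}\oplus\mathcal{H}$ induces $\langle x,z\rangle_{A_0}=\langle x_1,z_1\rangle_A+\langle x_2,z_2\rangle_A$, and $d\omega_{A_0}(X)=\sup\{(|\langle Xz,z\rangle_{A_0}|^2+\|Xz\|_{A_0}^4)^{1/2}:\|z\|_{A_0}=1\}$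 is the $A_0$-Davis-Wielandt radius. *)

(* Defs.v *)
From HB Require Import structures.
From mathcomp Require Import all_boot all_order all_algebra.
From mathcomp Require Import all_classical all_reals.
From mathcomp Require Import complex.
Set Implicit Arguments. Unset Strict Implicit. Unset Printing Implicit Defensive.
Import Order.TTheory GRing.Theory Num.Theory.
Local Open Scope ring_scope.
Local Open Scope classical_set_scope.

Notation cnorm := ComplexField.Normc.normc.

Section Defs.
Variables (R : realType) (V : lmodType R[i]) (ip : V -> V -> R[i]).

Definition hnorm (x : V) : R := Num.sqrt (complex.Re (ip x x)).

Record hilbert : Prop := {
  ip_linl : forall (a : R[i]) (x y z : V), ip (a *: x + y) z = a * ip x z + ip y z;
  ip_conj : forall x y : V, ip y x = (ip x y)^*;
  ip_pos : forall x : V, 0 <= ip x x;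
  ip_def : forall x : V, ip x x = 0 -> x = 0;
  ip_complete : forall u : nat -> V,
    (forall e : R, 0 < e -> exists N : nat, forall m n : nat,
        (N <= m)%N -> (N <= n)%N -> hnorm (u m - u n) < e) ->
    exists l : V, forall e : R, 0 < e -> exists N : nat, forall n : nat,
        (N <= n)%N -> hnorm (u n - l) < e }.

Definition bounded_op (T : V -> V) : Prop :=
  (forall (a : R[i]) (x y : V), T (a *: x + y) = a *: T x + T y) /\
  exists M : R, forall x : V, hnorm (T x) <= M * hnorm x.

Definition positive_op (A : V -> V) : Prop :=
  bounded_op A /\ forall z : V, 0 <= ip (A z) z.

Definition ipA (A : V -> V) (x z : V) : R[i] := ip (A x) z.
Definition normA (A : V -> V) (z : V) : R := Num.sqrt (complex.Re (ipA A z z)).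

Definition is_A_adjoint (A S T : V -> V) : Prop :=
  bounded_op T /\ forall x y : V, ipA A (S x) y = ipA A x (T y).

Definition in_BA (A S : V -> V) : Prop :=
  bounded_op S /\ exists T : V -> V, is_A_adjoint A S T.

(* T = S^{#_A} = A^dagger S^* A : the unique A-adjoint of S whose range lies
   in closure(R(A)) = N(A)^perp *)
Definition is_sharpA (A S T : V -> V) : Prop :=
  is_A_adjoint A S T /\ forall (y n : V), A n = 0 -> ip (T y) n = 0.

Definition omegaA (A S : V -> V) : R :=
  sup [set cnorm (ipA A (S z) z) | z in [set z | normA A z = 1]].

(* A_0 = diag(A, A) on H (+) H *)
Definition ipA0 (A : V -> V) (x z : V * V) : R[i] :=
  ipA A x.1 z.1 + ipA A x.2 z.2.
Definition normA0 (A : V -> V) (z : V * V) : R :=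
  Num.sqrt (complex.Re (ipA0 A z z)).

Definition dwA0 (A : V -> V) (X : V * V -> V * V) : R :=
  sup [set Num.sqrt (cnorm (ipA0 A (X z) z) ^+ 2 + normA0 A (X z) ^+ 4)
      | z in [set z | normA0 A z = 1]].

Definition antidiag (B C : V -> V) (z : V * V) : V * V := (B z.2, C z.1).

End Defs.

(* Main.v *)
Require Import Defs.
From HB Require Import structures.
From mathcomp Require Import all_boot all_order all_algebra.
From mathcomp Require Import all_classical all_reals.
From mathcomp Require Import complex.
From mathcomp Require Import ring lra.
Import Order.TTheory GRing.Theory Num.Theory.
Local Open Scope ring_scope.

Set Implicit Arguments.
Unset Strict Implicit.
Local Notation "x %:C" := (real_complex _ x) (format "x %:C") : ring_scope.

Section Polar.
Variables (R : realType) (W : lmodType R[i]) (f : W -> W -> R[i]).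
Hypothesis fl : forall a x y z, f (a *: x + y) z = a * f x z + f y z.
Hypothesis fr : forall a x y z, f z (a *: x + y) = a^* * f z x + f z y.
Hypothesis fp : forall x, 0 <= f x x.

Lemma pf0l z : f 0 z = 0.
Proof. have h := fl 1 0 0 z; rewrite scale1r addr0 mul1r in h. by apply: (addrI (f 0 z)); rewrite addr0 -h. Qed.
Lemma pf0r z : f z 0 = 0.
Proof. have h := fr 1 0 0 z; rewrite scale1r addr0 conjC1 mul1r in h. by apply: (addrI (f z 0)); rewrite addr0 -h. Qed.
Lemma pfDl x y z : f (x + y) z = f x z + f y z.
Proof. by rewrite -[x]scale1r fl mul1r scale1r. Qed.
Lemma pfDr x y z : f z (x + y) = f z x + f z y.
Proof. by rewrite -[x]scale1r fr conjC1 mul1r scale1r. Qed.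
Lemma pfZl a x z : f (a *: x) z = a * f x z.
Proof. by rewrite -[a *: x]addr0 fl pf0l addr0. Qed.
Lemma pfZr a x z : f z (a *: x) = a^* * f z x.
Proof. by rewrite -[a *: x]addr0 fr pf0r addr0. Qed.

Lemma realC {z : R[i]} : 0 <= z -> z = (complex.Re z)%:C.
Proof. by move/ger0_Im; case: z => a b /= ->. Qed.

Lemma polar x y : f y x = (f x y)^*.
Proof.
have h1 := fp (x + y); have h2 := fp (x + 'i *: y).
rewrite !pfDl !pfDr !pfZl !pfZr in h1 h2.
rewrite (realC (fp x)) (realC (fp y)) in h1 h2.
move: h1 h2; case: (f x y) => a1 a2; case: (f y x) => b1 b2.
move: (complex.Re (f x x)) (complex.Re (f y y)) => p q.
rewrite !lecE /= => /andP[/eqP e1 _] /andP[/eqP e2 _].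
apply/eqP; rewrite eq_complex /=; apply/andP; split; apply/eqP; lra.
Qed.
End Polar.

Lemma geo_le (R : realType) (r c : R) : (forall n : nat, r ^+ n <= c) -> r <= 1.
Proof.
move=> h; rewrite leNgt; apply/negP => r1.
have bern : forall n : nat, 1 + n%:R * (r - 1) <= r ^+ n.
  elim=> [|n IH]; first by rewrite mul0r addr0 expr0.
  rewrite exprS mulrSr.
  have N0 : 0 <= (n%:R : R) by [].
  have aux : 0 <= n%:R * (r - 1) * (r - 1) by rewrite mulr_ge0 // ?mulr_ge0 // subr_ge0 ltW.
  nra.
have c1 : 1 <= c by have := h 0%N; rewrite expr0.
have cp : 0 <= c / (r - 1) by apply: divr_ge0; lra.
have := archi_boundP cp; set n := Num.Def.archi_bound _ => hn.
rewrite ltr_pdivrMr ?subr_gt0 // in hn.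
have := le_trans (bern n) (h n).
lra.
Qed.

Section Form.
Variables (R : realType) (W : lmodType R[i]) (f : W -> W -> R[i]).
Hypothesis fl : forall a x y z, f (a *: x + y) z = a * f x z + f y z.
Hypothesis fc : forall x y, f y x = (f x y)^*.
Hypothesis fp : forall x, 0 <= f x x.

Definition Qf x := complex.Re (f x x).
Definition Nf x y := cnorm (f x y).

Lemma cD (a b : R[i]) : (a + b)^* = a^* + b^*. Proof. exact: rmorphD. Qed.
Lemma cM (a b : R[i]) : (a * b)^* = a^* * b^*. Proof. exact: rmorphM. Qed.
Lemma cN (a : R[i]) : (- a)^* = - a^*. Proof. exact: rmorphN. Qed.
Lemma cK (a : R[i]) : a^*^* = a. Proof. exact: conjCK. Qed.

Lemma f0l z : f 0 z = 0.
Proof. have h := fl 1 0 0 z; rewrite scale1r addr0 mul1r in h. by apply: (addrI (f 0 z)); rewrite addr0 -h. Qed.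
Lemma fDl x y z : f (x + y) z = f x z + f y z.
Proof. by rewrite -[x]scale1r fl mul1r scale1r. Qed.
Lemma fZl a x z : f (a *: x) z = a * f x z.
Proof. by rewrite -[a *: x]addr0 fl f0l addr0. Qed.
Lemma fNl x z : f (- x) z = - f x z.
Proof. by rewrite -scaleN1r fZl mulN1r. Qed.
Lemma fBl x y z : f (x - y) z = f x z - f y z.
Proof. by rewrite fDl fNl. Qed.
Lemma fDr x y z : f z (x + y) = f z x + f z y.
Proof. by rewrite (fc (x+y) z) (fc x z) (fc y z) fDl cD. Qed.
Lemma fZr a x z : f z (a *: x) = a^* * f z x.
Proof. by rewrite (fc (a *: x) z) (fc x z) fZl cM. Qed.
Lemma fNr x z : f z (- x) = - f z x.
Proof. by rewrite (fc (- x) z) (fc x z) fNl cN. Qed.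
Lemma fBr x y z : f z (x - y) = f z x - f z y.
Proof. by rewrite fDr fNr. Qed.

Lemma fQ x : f x x = (Qf x)%:C.
Proof. rewrite /Qf; have := ger0_Im (fp x); by case: (f x x) => a b /= ->. Qed.
Lemma Qf_ge0 x : 0 <= Qf x.
Proof. by rewrite -ler0c -fQ; exact: fp. Qed.
Lemma Nf_ge0 x y : 0 <= Nf x y.
Proof. by rewrite -ler0c; exact: (normr_ge0 (f x y)). Qed.

Lemma normsq (a : R[i]) : a * a^* = ((cnorm a) ^+ 2)%:C.
Proof. by rewrite -normCK rmorphXn. Qed.
Lemma conjR (r : R) : (r%:C)^* = r%:C.
Proof. exact: conjc_real. Qed.

Lemma expand x y t : f (x + t *: y) (x + t *: y) =
  f x x + t * (f x y)^* + t^* * f x y + t * t^* * f y y.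
Proof. rewrite !fDl !fDr !fZl !fZr (fc x y). ring. Qed.

Lemma cV (a : R[i]) : (a^-1)^* = (a^*)^-1. Proof. exact: fmorphV. Qed.

Lemma c2 : (2 : R)%:C = 2.
Proof. by rewrite rmorphMn rmorph1. Qed.

Lemma posE x y t : 0 <= (Qf x)%:C + t * (f x y)^* + t^* * f x y + t * t^* * (Qf y)%:C.
Proof. by rewrite -!fQ -expand. Qed.

Lemma CS x y : Nf x y ^+ 2 <= Qf x * Qf y.
Proof.
have E := posE x y; have na := normsq (f x y).
rewrite -/(Nf x y) in na.
move: E na; set a := f x y; set p := Qf x; set q := Qf y; set n := Nf x y => E na.
have p0 : 0 <= p by apply: Qf_ge0.
have q0 : 0 <= q by apply: Qf_ge0.
case: (ltrP 0 q) => [qpos|qle0].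
  have qc : q%:C != 0 by rewrite eq_complex /= negb_and (gt_eqF qpos).
  have := E (- a / q%:C).
  rewrite cM cN cV conjR.
  have -> : p%:C + - a / q%:C * a^* + - a^* / q%:C * a + - a / q%:C * (- a^* / q%:C) * q%:C
     = p%:C - (a * a^*) / q%:C by field.
  rewrite na -fmorphV -rmorphM -rmorphB ler0c subr_ge0 => h.
  by rewrite ler_pdivrMr // in h.
have q00 : q = 0 by apply/eqP; rewrite eq_le qle0 q0.
have [n0|n0] := eqVneq n 0.
  by rewrite n0 q00 expr0n /= mulr0.
have [k kdef] : exists k, k = (p + 1) / (2 * n ^+ 2) by eexists.
have := E (- a * k%:C).
rewrite cM cN conjR q00.
have -> : p%:C + - a * k%:C * a^* + - a^* * k%:C * a + - a * k%:C * (- a^* * k%:C) * 0%:C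
   = p%:C - 2 * k%:C * (a * a^*) by rewrite rmorph0; ring.
rewrite na -c2 -!rmorphM -rmorphB ler0c.
have -> : 2 * k * n ^+ 2 = p + 1.
  by rewrite kdef; field.
move=> h; exfalso; move: h; rewrite subr_ge0; apply/negP; by rewrite -ltNge ltrDl ltr01.
Qed.

Lemma Nf_conj x y : Nf y x = Nf x y.
Proof. apply: complexI; rewrite /Nf fc; exact: (norm_conjC (f x y)). Qed.

Lemma NfQ x : Nf x x = Qf x.
Proof. apply: complexI; rewrite /Nf fQ; change (`|(Qf x)%:C| = (Qf x)%:C); by rewrite ger0_norm // ler0c Qf_ge0. Qed.

Lemma Buz x e y : Qf e = 1 -> 2 * (Nf x e * Nf e y) <= (Qf x + Qf y) / 2 + Nf x y.
Proof.
move=> Qe.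
set a := f x e.
set z := (2 * a) *: e - x.
have Qz : Qf z = Qf x.
  apply: complexI; rewrite -!fQ /z fBl !fBr !fZl !fZr (fQ e) Qe rmorph1 (fc x e) -/a cM conjC_nat.
  ring.
have fz : f z y = 2 * a * f e y - f x y by rewrite /z fBl fZl.
have cs := CS z y; rewrite Qz in cs.
have h1 : 2 * (Nf x e * Nf e y) <= Nf z y + Nf x y.
  rewrite -lecR rmorphD !rmorphM rmorphMn rmorph1 mulrA /Nf.
  have := ler_normD (f z y) (f x y); rewrite fz subrK normrM normrM normr_nat.
  by [].
have := Qf_ge0 x; have := Qf_ge0 y; have := Nf_ge0 z y.
move: h1 cs; set u := Nf z y; set v := Nf x y; set w := 2 * _; set qx := Qf x; set qy := Qf y.
move=> h1 cs u0 qy0 qx0.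
have s0 : 0 <= (qx + qy) / 2 by apply: divr_ge0; [apply: addr_ge0|].
have hq : qx * qy <= ((qx + qy) / 2) ^+ 2.
  rewrite -subr_ge0.
  have -> : ((qx + qy) / 2) ^+ 2 - qx * qy = ((qx - qy) / 2) ^+ 2 by field.
  exact: sqr_ge0.
have hs := le_trans cs hq.
have hu : u <= (qx + qy) / 2 by nra.
lra.
Qed.

Lemma power_bound (P : W -> W) x m K : (forall u v, f (P u) v = f u (P v)) ->
  1 <= m -> (forall n, Qf (iter n P x) <= K * m ^+ n) -> Qf (P x) <= m * Qf x.
Proof.
move=> Psa m1 hK.
pose s k := Qf (iter k P x).
have s0' k : 0 <= s k by apply: Qf_ge0.
have lc k : s k.+1 ^+ 2 <= s k * s k.+2.
  have := CS (iter k P x) (iter k.+2 P x).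
  suff -> : Nf (iter k P x) (iter k.+2 P x) = s k.+1 by [].
  by rewrite /s -NfQ /Nf /= -Psa.
have [z0|zp] : s 0%N = 0 \/ 0 < s 0%N.
  by have := s0' 0%N; rewrite le_eqVlt => /orP[/eqP ->|->]; [left|right].
  have := lc 0%N; rewrite z0 mul0r => h.
  have h1 : s 1%N = 0 by have := s0' 1%N; nra.
  have -> : Qf (P x) = s 1%N by [].
  have -> : Qf x = s 0%N by [].
  by rewrite h1 z0 mulr0.
pose rho := s 1%N / s 0%N.
have rho0 : 0 <= rho by apply: divr_ge0.
have step k : rho * s k <= s k.+1.
  elim: k => [|k IH]; first by rewrite /rho divfK // gt_eqF.
  have := lc k; have := s0' k; have := s0' k.+1; have := s0' k.+2.
  move=> a2 a1 a0 hl.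
  have [e0|ep] : s k = 0 \/ 0 < s k.
    by move: a0; rewrite le_eqVlt => /orP[/eqP ->|->]; [left|right].
    have : s k.+1 = 0 by rewrite e0 mul0r in hl; nra.
    by move=> ->; rewrite mulr0.
  have : s k * (rho * s k.+1) <= s k * s k.+2 by nra.
  by rewrite ler_pM2l.
have geo n : rho ^+ n * s 0%N <= s n.
  elim: n => [|n IH]; first by rewrite expr0 mul1r.
  rewrite exprS -mulrA; apply: le_trans (step n).
  by rewrite ler_wpM2l.
have m0 : 0 < m by apply: lt_le_trans m1; exact: ltr01.
have : rho / m <= 1.
  apply: (@geo_le _ _ (K / s 0%N)) => n.
  rewrite expr_div_n ler_pdivrMr ?exprn_gt0 // mulrAC ler_pdivlMr //.
  apply: le_trans (geo n) _; exact: hK.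
rewrite ler_pdivrMr // mul1r => hr.
have -> : Qf (P x) = s 1%N by [].
have -> : Qf x = s 0%N by [].
have -> : s 1%N = rho * s 0%N by rewrite /rho divfK // gt_eqF.
by rewrite ler_wpM2r // ltW.
Qed.

End Form.

Lemma cnormM (R : realType) (a b : R[i]) : cnorm (a * b) = cnorm a * cnorm b.
Proof. apply: complexI; rewrite rmorphM; exact: (normrM a b). Qed.
Lemma cnormD (R : realType) (a b : R[i]) : cnorm (a + b) <= cnorm a + cnorm b.
Proof. rewrite -lecR rmorphD; exact: (ler_normD a b). Qed.
Lemma cnormR (R : realType) (r : R) : 0 <= r -> cnorm r%:C = r.
Proof. move=> r0; apply: complexI; change (`|r%:C| = r%:C); by rewrite ger0_norm // ler0c. Qed.
Lemma cnorm_ge0 (R : realType) (a : R[i]) : 0 <= cnorm a.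
Proof. by rewrite -ler0c; exact: (normr_ge0 a). Qed.

Lemma sup_ge0' (R : realType) (E : set R) : (forall x, E x -> 0 <= x) -> 0 <= sup E.
Proof.
move=> hE; case: (pselect (has_sup E)) => [hs|nh]; last by rewrite sup_out.
have [[e Ee] _] := hs; apply: le_trans (hE _ Ee) _; exact: sup_upper_bound.
Qed.

Section Main.
Variables (R : realType) (V : lmodType R[i]) (ip : V -> V -> R[i]) (A : V -> V).
Hypothesis hH : hilbert ip.
Hypothesis hA : positive_op ip A.

Let ipl := ip_linl hH.
Let ipc := ip_conj hH.
Let ipp := ip_pos hH.

Definition h x y := ip (A x) y.

Lemma lin0 (S : V -> V) : bounded_op ip S -> S 0 = 0.
Proof.
case=> l _; have e := l 1 0 0; rewrite scale1r addr0 scale1r in e.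
by apply: (addrI (S 0)); rewrite addr0 -e.
Qed.
Lemma linZ (S : V -> V) a x : bounded_op ip S -> S (a *: x) = a *: S x.
Proof. by move=> bS; rewrite -[a *: x]addr0 bS.1 (lin0 bS) addr0. Qed.
Lemma linD (S : V -> V) x y : bounded_op ip S -> S (x + y) = S x + S y.
Proof. by move=> bS; have := bS.1 1 x y; rewrite !scale1r. Qed.

Let hl : forall a x y z, h (a *: x + y) z = a * h x z + h y z.
Proof. by move=> a x y z; rewrite /h hA.1.1 ipl. Qed.
Let hr : forall a x y z, h z (a *: x + y) = a^* * h z x + h z y.
Proof. by move=> a x y z; rewrite /h (fDr ipl ipc) (fZr ipl ipc). Qed.
Let hp : forall x, 0 <= h x x.
Proof. by move=> x; exact: hA.2. Qed.
Let hc : forall x y, h y x = (h x y)^*.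
Proof. exact: polar hl hr hp. Qed.

Definition Qh := Qf h.
Definition Qi := Qf ip.

Definition QB (S : V -> V) := exists c, 0 <= c /\ forall u, Qh (S u) <= c * Qh u.
Definition NB (S : V -> V) := exists c, forall u, Nf h (S u) u <= c * Qh u.

Lemma opQ (T : V -> V) : bounded_op ip T -> exists c, 0 <= c /\ forall u, Qi (T u) <= c * Qi u.
Proof.
case=> _ [M hM]; exists (M ^+ 2); split; first exact: sqr_ge0.
move=> u; have := hM u; rewrite /hnorm => hu.
have q0 := Qf_ge0 ipp (T u); have q1 := Qf_ge0 ipp u.
have {}hu : Num.sqrt (Qf ip (T u)) <= M * Num.sqrt (Qf ip u) := hu.
have s0 := sqrtr_ge0 (Qf ip (T u)).
have s1 := sqrtr_ge0 (Qf ip u).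
rewrite /Qi -(sqr_sqrtr q0) -(sqr_sqrtr q1).
move: hu s0 s1; set a := Num.sqrt (Qf ip (T u)); set b := Num.sqrt (Qf ip u) => hu s0 s1.
nra.
Qed.

Lemma QhQi : exists c, 0 <= c /\ forall u, Qh u <= c * Qi u.
Proof.
have [c [c0 hc']] := opQ hA.1.
exists (c + 1); split; first lra.
move=> u.
have cs := CS ipl ipc ipp (A u) u.
have e : Nf ip (A u) u = Qh u by rewrite /Qh -(NfQ hp).
rewrite e in cs.
have := hc' u; have := Qf_ge0 ipp u; have := Qf_ge0 hp u.
rewrite -/(Qi u) -/(Qi (A u)) -/(Qh u).
move: cs; set a := Qh u; set b := Qi u; set d := Qi (A u) => cs a0 b0 hd.
have h2 : a ^+ 2 <= c * b ^+ 2 by nra.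
have h3 : c * b ^+ 2 <= ((c + 1) * b) ^+ 2 by nra.
have h4 := le_trans h2 h3.
have cb : 0 <= (c + 1) * b by nra.
nra.
Qed.

Lemma QB_adj (S T : V -> V) : bounded_op ip S -> bounded_op ip T ->
  (forall x y, h (S x) y = h x (T y)) -> QB S.
Proof.
move=> bS bT adj.
have adjr : forall x y, h (T x) y = h x (S y).
  by move=> x y; rewrite (hc y (T x)) -adj (hc (S y) x).
pose P := fun u => T (S u).
have Psa : forall u v, h (P u) v = h u (P v) by move=> u v; rewrite /P adjr adj.
have [cS [cS0 hS]] := opQ bS; have [cT [cT0 hT]] := opQ bT; have [cA [cA0 hAq]] := QhQi.
pose m := cT * cS + 1.
have m1 : 1 <= m by rewrite /m lerDr mulr_ge0.
have key : forall u, Qh (P u) <= m * Qh u.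
  move=> u; apply: (power_bound hl hc hp Psa m1 (K := cA * Qi u)) => n.
  have it : Qi (iter n P u) <= (cT * cS) ^+ n * Qi u.
    elim: n => [|n IH]; first by rewrite expr0 mul1r.
    rewrite iterS /P; set w := iter n _ u.
    have a1 := hT (S w); have a2 := hS w.
    have b1 : cT * Qi (S w) <= cT * (cS * Qi w) by apply: ler_wpM2l.
    have b2 : cT * (cS * Qi w) <= cT * (cS * ((cT * cS) ^+ n * Qi u)).
      by apply: ler_wpM2l => //; apply: ler_wpM2l.
    apply: le_trans a1 (le_trans b1 (le_trans b2 _)).
    by rewrite exprS !mulrA.
  have pw : (cT * cS) ^+ n <= m ^+ n.
    by apply: lerXn2r; rewrite ?nnegrE ?mulr_ge0 ?(le_trans ler01 m1) // /m lerDl.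
  have qi0 := Qf_ge0 ipp u.
  apply: le_trans (hAq _) _; rewrite -mulrA; apply: ler_wpM2l => //.
  apply: le_trans it _; rewrite mulrC; apply: ler_wpM2l => //.
exists m; split; first exact: le_trans ler01 m1.
move=> u.
have e : Nf h u (P u) = Qh (S u) by rewrite /Qh -(NfQ hp) /Nf /P -adj.
have cs := CS hl hc hp u (P u); rewrite e in cs.
have k := key u.
have q0 := Qf_ge0 hp u; have q1 := Qf_ge0 hp (S u); have q2 := Qf_ge0 hp (P u).
move: cs k q0 q1 q2; rewrite -/(Qh u) -/(Qh (S u)) -/(Qh (P u)).
set a := Qh (S u); set q := Qh u; set b := Qh (P u) => cs k q0 q1 q2.
have h2 : a ^+ 2 <= m * q ^+ 2 by nra.
have h3 : m * q ^+ 2 <= (m * q) ^+ 2 by nra.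
have h4 := le_trans h2 h3.
have mq : 0 <= m * q by nra.
nra.
Qed.

Lemma QB_comp S1 S2 : QB S1 -> QB S2 -> QB (fun z => S1 (S2 z)).
Proof.
move=> [c1 [c10 h1]] [c2 [c20 h2]]; exists (c1 * c2); split; first exact: mulr_ge0.
move=> u; apply: le_trans (h1 _) _; rewrite -mulrA; exact: ler_wpM2l.
Qed.

Lemma QB_NB S : QB S -> NB S.
Proof.
move=> [c [c0 hS]]; exists (c + 1) => u.
have cs := CS hl hc hp (S u) u.
have k := hS u; have q0 := Qf_ge0 hp u; have q1 := Qf_ge0 hp (S u).
have n0 := Nf_ge0 h (S u) u.
move: cs k q0 q1 n0; rewrite -/(Qh u) -/(Qh (S u)).
set a := Nf h (S u) u; set q := Qh u; set b := Qh (S u) => cs k q0 q1 n0.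
have h2 : a ^+ 2 <= c * q ^+ 2 by nra.
have h3 : c * q ^+ 2 <= ((c + 1) * q) ^+ 2 by nra.
have h4 := le_trans h2 h3.
have mq : 0 <= (c + 1) * q by nra.
nra.
Qed.

Lemma NB_add S1 S2 : NB S1 -> NB S2 -> NB (fun z => S1 z + S2 z).
Proof.
move=> [c1 h1] [c2 h2]; exists (c1 + c2) => u.
rewrite /Nf (fDl hl) mulrDl; apply: le_trans (cnormD _ _) _.
exact: lerD (h1 u) (h2 u).
Qed.

Lemma NB_scale (a : R[i]) S : NB S -> NB (fun z => a *: S z).
Proof.
move=> [c hS]; exists (cnorm a * c) => u.
rewrite /Nf (fZl hl) cnormM -mulrA; apply: ler_wpM2l; first exact: cnorm_ge0.
exact: hS.
Qed.

Lemma Qh1 z : normA ip A z = 1 -> Qh z = 1.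
Proof.
move=> e; have q0 := Qf_ge0 hp z.
have : Num.sqrt (Qh z) = 1 := e.
by move=> e'; rewrite /Qh -(sqr_sqrtr q0) -/(Qh z) e' expr1n.
Qed.

Lemma omega_bound S : NB S -> (forall a x, S (a *: x) = a *: S x) ->
  forall x, Nf h (S x) x <= omegaA ip A S * Qh x.
Proof.
move=> [c hS] lin x.
rewrite /omegaA.
set E := (X in sup X).
have Eub : ubound E c.
  move=> y [z /Qh1 z1 <-]; have := hS z; rewrite z1 mulr1; exact.
have q0 := Qf_ge0 hp x.
have n0 := Nf_ge0 h (S x) x.
case: (eqVneq (Qh x) 0) => [qz|qnz].
  have cs := CS hl hc hp (S x) x; rewrite -/(Qh x) qz mulr0 in cs.
  by rewrite qz mulr0; nra.
have qp : 0 < Qh x by rewrite lt_def qnz.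
set t := (Num.sqrt (Qh x))^-1.
have tp : 0 < t by rewrite invr_gt0 sqrtr_gt0.
have t2 : t ^+ 2 * Qh x = 1 by rewrite /t exprVn sqr_sqrtr // mulVf // gt_eqF.
set u := t%:C *: x.
have hu : h u u = (t ^+ 2 * Qh x)%:C.
  by rewrite /u (fZl hl) (fZr hl hc) conjR (fQ hp x) -!rmorphM mulrA expr2.
have Qu : Qh u = 1 by rewrite /Qh /Qf hu t2.
have Eu : E (Nf h (S u) u).
  exists u => //; rewrite /normA; change (Num.sqrt (Qh u) = 1); by rewrite Qu sqrtr1.
have le := ub_le_sup (ex_intro _ c Eub) Eu.
have e : Nf h (S u) u = t ^+ 2 * Nf h (S x) x.
  rewrite /Nf /u lin (fZl hl) (fZr hl hc) conjR mulrA -rmorphM cnormM cnormR ?expr2 //.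
  by rewrite mulr_ge0 // ltW.
rewrite e in le.
have -> : Nf h (S x) x = t ^+ 2 * Nf h (S x) x * Qh x by rewrite mulrAC t2 mul1r.
by apply: ler_wpM2r.
Qed.

Definition h0 := ipA0 ip A.

Let fl0 : forall a x y z, h0 (a *: x + y) z = a * h0 x z + h0 y z.
Proof. by move=> a [x1 x2] [y1 y2] [z1 z2]; rewrite /h0 /ipA0 /= /ipA -!/(h _ _) !hl; ring. Qed.
Let fc0 : forall x y, h0 y x = (h0 x y)^*.
Proof. by move=> [x1 x2] [y1 y2]; rewrite /h0 /ipA0 /= /ipA -!/(h _ _) cD -!hc. Qed.
Let fp0 : forall x, 0 <= h0 x x.
Proof. by move=> [x1 x2]; rewrite /h0 /ipA0 /= /ipA; apply: addr_ge0; apply: hp. Qed.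

Lemma Q0E u1 u2 : Qf h0 (u1, u2) = Qh u1 + Qh u2.
Proof.
apply: complexI; rewrite -(fQ fp0) /h0 /ipA0 /= /ipA -!/(h _ _) (fQ hp u1) (fQ hp u2).
by rewrite rmorphD.
Qed.

Lemma c4 : (4 : R)%:C = 4.
Proof. by rewrite rmorphMn rmorph1. Qed.

Variables (B C Bs Cs : V -> V).
Hypothesis hB : in_BA ip A B.
Hypothesis hC : in_BA ip A C.
Hypothesis hBs : is_sharpA ip A B Bs.
Hypothesis hCs : is_sharpA ip A C Cs.

Let bB := hB.1.
Let bC := hC.1.
Let bBs := hBs.1.1.
Let bCs := hCs.1.1.
Let adjB : forall x y, h (B x) y = h x (Bs y) := hBs.1.2.
Let adjC : forall x y, h (C x) y = h x (Cs y) := hCs.1.2.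
Let adjBr : forall x y, h (Bs x) y = h x (B y).
Proof. by move=> x y; rewrite (hc y (Bs x)) -adjB (hc (B y) x). Qed.
Let adjCr : forall x y, h (Cs x) y = h x (C y).
Proof. by move=> x y; rewrite (hc y (Cs x)) -adjC (hc (C y) x). Qed.

Let qB : QB B := QB_adj bB bBs adjB.
Let qBs : QB Bs := QB_adj bBs bB adjBr.
Let qC : QB C := QB_adj bC bCs adjC.
Let qCs : QB Cs := QB_adj bCs bC adjCr.

Let QE u : h u u = (Qh u)%:C := fQ hp u.

Lemma bound1 x : Qh (Bs x) + Qh (C x) + 4 * Qh (Cs (C x)) <=
  omegaA ip A (fun z => B (Bs z) + Cs (C z) + (4 : R[i]) *: Cs (C (Cs (C z)))) * Qh x.
Proof.
have -> : Qh (Bs x) + Qh (C x) + 4 * Qh (Cs (C x)) =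
   Nf h ((fun z => B (Bs z) + Cs (C z) + (4 : R[i]) *: Cs (C (Cs (C z)))) x) x.
  rewrite /Nf !(fDl hl) !(fZl hl) adjB adjCr adjCr (adjC (Cs (C x)) (C x)) !QE -c4.
  rewrite -!rmorphM -!rmorphD cnormR //.
  by rewrite !addr_ge0 ?mulr_ge0 ?Qf_ge0.
apply: (omega_bound (S := fun z => B (Bs z) + Cs (C z) + (4 : R[i]) *: Cs (C (Cs (C z))))).
- apply: NB_add; [apply: NB_add|apply: NB_scale]; apply: QB_NB.
  + exact: QB_comp.
  + exact: QB_comp.
  + by apply: QB_comp => //; apply: QB_comp => //; apply: QB_comp.
- move=> a z; rewrite !(linZ _ _ bB, linZ _ _ bBs, linZ _ _ bC, linZ _ _ bCs).
  by rewrite !scalerDr !scalerA mulrC.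
Qed.

Lemma bound2 y : Qh (B y) + Qh (Cs y) + 4 * Qh (Bs (B y)) <=
  omegaA ip A (fun z => Bs (B z) + C (Cs z) + (4 : R[i]) *: Bs (B (Bs (B z)))) * Qh y.
Proof.
have -> : Qh (B y) + Qh (Cs y) + 4 * Qh (Bs (B y)) =
   Nf h ((fun z => Bs (B z) + C (Cs z) + (4 : R[i]) *: Bs (B (Bs (B z)))) y) y.
  rewrite /Nf !(fDl hl) !(fZl hl) (adjBr (B y) y) (adjC (Cs y) y).
  rewrite (adjBr (B (Bs (B y))) y) (adjB (Bs (B y)) (B y)) !QE -c4.
  rewrite -!rmorphM -!rmorphD cnormR //.
  by rewrite !addr_ge0 ?mulr_ge0 ?Qf_ge0.
apply: (omega_bound (S := fun z => Bs (B z) + C (Cs z) + (4 : R[i]) *: Bs (B (Bs (B z))))).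
- apply: NB_add; [apply: NB_add|apply: NB_scale]; apply: QB_NB.
  + exact: QB_comp.
  + exact: QB_comp.
  + by apply: QB_comp => //; apply: QB_comp => //; apply: QB_comp.
- move=> a z; rewrite !(linZ _ _ bB, linZ _ _ bBs, linZ _ _ bC, linZ _ _ bCs).
  by rewrite !scalerDr !scalerA mulrC.
Qed.

Lemma bound3 x : Nf h (B (C x)) x <= omegaA ip A (fun z => B (C z)) * Qh x.
Proof.
apply: (omega_bound (S := fun z => B (C z))); first by apply: QB_NB; apply: QB_comp.
by move=> a z; rewrite (linZ _ _ bC) (linZ _ _ bB).
Qed.

Lemma bound4 x : Nf h (C (B x)) x <= omegaA ip A (fun z => C (B z)) * Qh x.
Proof.
apply: (omega_bound (S := fun z => C (B z))); first by apply: QB_NB; apply: QB_comp.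
by move=> a z; rewrite (linZ _ _ bB) (linZ _ _ bC).
Qed.

Lemma omega_ge0 S : 0 <= omegaA ip A S.
Proof. by apply: sup_ge0' => _ [z _ <-]; exact: cnorm_ge0. Qed.

Lemma pointwise x y : Qh x + Qh y = 1 ->
  cnorm (ipA0 ip A (antidiag B C (x, y)) (x, y)) ^+ 2 + normA0 ip A (antidiag B C (x, y)) ^+ 4 <=
    4^-1 * Num.max
      (omegaA ip A (fun z => B (Bs z) + Cs (C z) + (4 : R[i]) *: Cs (C (Cs (C z)))))
      (omegaA ip A (fun z => Bs (B z) + C (Cs z) + (4 : R[i]) *: Bs (B (Bs (B z)))))
    + 2^-1 * Num.max (omegaA ip A (fun z => B (C z))) (omegaA ip A (fun z => C (B z))).
Proof.
move=> q1.
have b1 := bound1 x; have b2 := bound2 y; have b3 := bound3 x; have b4 := bound4 y.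
move: b1 b2 b3 b4.
set w1 := omegaA ip A _; set w2 := omegaA ip A _; set w3 := omegaA ip A _; set w4 := omegaA ip A _.
move=> b1 b2 b3 b4.
have w10 : 0 <= w1 := omega_ge0 _.
have w20 : 0 <= w2 := omega_ge0 _.
have w30 : 0 <= w3 := omega_ge0 _.
have w40 : 0 <= w4 := omega_ge0 _.
have Tz : antidiag B C (x, y) = (B y, C x) by [].
rewrite Tz.
have nA : normA0 ip A (B y, C x) ^+ 4 = (Qh (B y) + Qh (C x)) ^+ 2.
  have -> : normA0 ip A (B y, C x) = Num.sqrt (Qf h0 (B y, C x)) by [].
  rewrite Q0E -(sqr_sqrtr (addr_ge0 (Qf_ge0 hp (B y)) (Qf_ge0 hp (C x)))).
  by rewrite sqrtr_sqr ger0_norm ?sqrtr_ge0 // -exprM.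
rewrite nA.
have -> : cnorm (ipA0 ip A (B y, C x) (x, y)) = Nf h0 (B y, C x) (x, y) by [].
have Qz1 : Qf h0 (x, y) = 1 by rewrite Q0E.
have bz := Buz fl0 fc0 fp0 (B y, C x) (Cs y, Bs x) Qz1.
have e1 : Nf h0 (x, y) (Cs y, Bs x) = Nf h0 (B y, C x) (x, y).
  by rewrite /Nf /h0 /ipA0 /= /ipA -!/(h _ _) (adjB y x) (adjC x y) addrC.
have e2 : Nf h0 (B y, C x) (Cs y, Bs x) <= Nf h (C (B y)) y + Nf h (B (C x)) x.
  rewrite /Nf /h0 /ipA0 /= /ipA -!/(h _ _) -(adjC (B y) y) -(adjB (C x) x).
  exact: cnormD.
have e3 : Nf h0 (Cs (C x), Bs (B y)) (x, y) = Qh (C x) + Qh (B y).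
  rewrite /Nf /h0 /ipA0 /= /ipA -!/(h _ _) (adjCr (C x) x) (adjBr (B y) y) !QE.
  by rewrite -rmorphD cnormR // addr_ge0 // Qf_ge0.
have cs := CS fl0 fc0 fp0 (Cs (C x), Bs (B y)) (x, y).
rewrite e3 Qz1 mulr1 Q0E in cs.
rewrite !Q0E e1 in bz.
have qx0 := Qf_ge0 hp x; have qy0 := Qf_ge0 hp y.
have m12 : w1 * Qh x + w2 * Qh y <= Num.max w1 w2.
  have a1 : w1 * Qh x <= Num.max w1 w2 * Qh x by apply: ler_wpM2r => //; rewrite le_max lexx.
  have a2 : w2 * Qh y <= Num.max w1 w2 * Qh y by apply: ler_wpM2r => //; rewrite le_max lexx orbT.
  by have := lerD a1 a2; rewrite -mulrDr q1 mulr1.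
have m34 : w3 * Qh x + w4 * Qh y <= Num.max w3 w4.
  have a1 : w3 * Qh x <= Num.max w3 w4 * Qh x by apply: ler_wpM2r => //; rewrite le_max lexx.
  have a2 : w4 * Qh y <= Num.max w3 w4 * Qh y by apply: ler_wpM2r => //; rewrite le_max lexx orbT.
  by have := lerD a1 a2; rewrite -mulrDr q1 mulr1.
move: bz e2 cs b1 b2 b3 b4 m12 m34.
set al := Nf h0 (B y, C x) (x, y).
set M12 := Num.max w1 w2; set M34 := Num.max w3 w4.
set d := Nf h0 (B y, C x) (Cs y, Bs x).
set n3 := Nf h (B (C x)) x; set n4 := Nf h (C (B y)) y.
move=> bz e2 cs b1 b2 b3 b4 m12 m34.
nra.
Qed.

Lemma main_ineq :
  dwA0 ip A (antidiag B C) ^+ 2 <=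
    4^-1 * Num.max
      (omegaA ip A (fun z => B (Bs z) + Cs (C z) + (4 : R[i]) *: Cs (C (Cs (C z)))))
      (omegaA ip A (fun z => Bs (B z) + C (Cs z) + (4 : R[i]) *: Bs (B (Bs (B z)))))
    + 2^-1 * Num.max (omegaA ip A (fun z => B (C z))) (omegaA ip A (fun z => C (B z))).
Proof.
set RHS := (X in _ <= X).
have R0 : 0 <= RHS.
  rewrite /RHS; apply: addr_ge0; apply: mulr_ge0; rewrite ?invr_ge0 ?ler0n //;
  by rewrite le_max omega_ge0.
rewrite /dwA0; set S := (X in sup X).
have ub : ubound S (Num.sqrt RHS).
  move=> _ [[x y] /= z1 <-]; apply: ler_wsqrtr; apply: pointwise.
  have q0 := Qf_ge0 fp0 (x, y).
  have e : Num.sqrt (Qf h0 (x, y)) = 1 := z1.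
  by rewrite -Q0E -(sqr_sqrtr q0) e expr1n.
have s0 : 0 <= sup S by apply: sup_ge0' => _ [z _ <-]; exact: sqrtr_ge0.
have sl : sup S <= Num.sqrt RHS.
  case: (pselect (S !=set0)%classic) => [ne|e]; first exact: ge_sup.
  have -> : S = set0 by apply/seteqP; split=> // s Ss; exfalso; apply: e; exists s.
  by rewrite sup0 sqrtr_ge0.
rewrite -(sqr_sqrtr R0); apply: lerXn2r => //; rewrite nnegrE ?sqrtr_ge0 //.
Qed.

End Main.

Unset Implicit Arguments.
Set Strict Implicit.

Theorem theorem3p6 (R : realType) (V : lmodType R[i]) (ip : V -> V -> R[i])
    (A B C Bs Cs : V -> V) :
  hilbert ip -> positive_op ip A ->
  in_BA ip A B -> in_BA ip A C ->
  is_sharpA ip A B Bs -> is_sharpA ip A C Cs ->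
  dwA0 ip A (antidiag B C) ^+ 2 <=
    4^-1 * Num.max
      (omegaA ip A (fun z => B (Bs z) + Cs (C z) + (4 : R[i]) *: Cs (C (Cs (C z)))))
      (omegaA ip A (fun z => Bs (B z) + C (Cs z) + (4 : R[i]) *: Bs (B (Bs (B z)))))
    + 2^-1 * Num.max (omegaA ip A (fun z => B (C z))) (omegaA ip A (fun z => C (B z))).
Proof.
move=> hH hA hB hC hBs hCs; exact: (main_ineq hH hA hB hC hBs hCs).
Qed.
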